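(* Let $(\lambda_k,\Gamma_k,\Theta_k)_{k\in\mathbb N}$ be a sequence in $\mathcal C_2$ with $\lim_{k\to\infty}\lambda_k=0$. Then it is not an infimizing sequence for $\tilde J$ on $\mathcal C_2$, i.e. $\tilde J(\lambda_k,\Gamma_k,\Theta_k)$ does not converge to $\inf_{\mathcal C_2}\tilde J$.
   Context: Notation: $\mathbf Q_n$ real symmetric $n\times n$ matrices; $\mathbf D_n$ diagonal matrices; $\mathbf M_n$ symmetric matrices with zero diagonal; $|\cdot|$ the determinant. $\hat\Sigma\in\mathbf Q_n$, $\hat\Sigma\succ0$. Let $\chi$ be the map keeping off-diagonal entries and zeroing the diagonal, $\delta_{max}:=\log|[\hat\Sigma^{-1}-\chi(\hat\Sigma^{-1})]\hat\Sigma|$, and assume $0<\delta<\delta_{max}$. Define $$\tilde J(\lambda,\Gamma,\Theta):=\lambda\Big(-\log\big|\hat\Sigma^{-1}+\lambda^{-1}(\chi(\Theta)-\Gamma)\big|-\log|\hat\Sigma|+\delta\Big),$$ $$\mathcal C_2:=\{(\lambda,\Gamma,\Theta):\ \lambda>0,\ I+\Gamma-\Theta\succeq0,\ \Gamma\succeq0,\ \Gamma\in\mathbf D_n,\ \Theta\in\mathbf M_n,\ \hat\Sigma^{-1}+\lambda^{-1}(\Theta-\Gamma)\succ0\}$$ (on $\mathcal C_2$, $\chi(\Theta)=\Theta$). *)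

(* Defs.v *)
From HB Require Import structures.
From mathcomp Require Import all_boot all_fingroup.
From Stdlib Require Import Reals ClassicalEpsilon.
Set Implicit Arguments. Unset Strict Implicit. Unset Printing Implicit Defensive.

Local Open Scope R_scope.

HB.instance Definition _ := Monoid.isComLaw.Build R 0 Rplus
  (fun a b c => Logic.eq_sym (Rplus_assoc a b c)) Rplus_comm Rplus_0_l.
HB.instance Definition _ := Monoid.isComLaw.Build R 1 Rmult
  (fun a b c => Logic.eq_sym (Rmult_assoc a b c)) Rmult_comm Rmult_1_l.

Definition Mat (n : nat) := 'I_n -> 'I_n -> R.

Definition mzero {n} : Mat n := fun _ _ => 0.
Definition mid {n} : Mat n := fun i j => if i == j then 1 else 0.
Definition madd {n} (A B : Mat n) : Mat n := fun i j => A i j + B i j.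
Definition msub {n} (A B : Mat n) : Mat n := fun i j => A i j - B i j.
Definition mscale {n} (c : R) (A : Mat n) : Mat n := fun i j => c * A i j.
Definition mmul {n} (A B : Mat n) : Mat n :=
  fun i j => \big[Rplus/0]_(k < n) (A i k * B k j).

Definition mdet {n} (A : Mat n) : R :=
  \big[Rplus/0]_(s : 'S_n)
     ((-1) ^ (odd_perm s) * \big[Rmult/1]_(i < n) A i (s i)).

Definition minv {n} (A : Mat n) : Mat n :=
  epsilon (inhabits mzero) (fun B => mmul A B = mid /\ mmul B A = mid).

Definition symmetric {n} (A : Mat n) : Prop := forall i j, A i j = A j i.
Definition is_diag {n} (A : Mat n) : Prop := forall i j, i <> j -> A i j = 0.
Definition is_M {n} (A : Mat n) : Prop := symmetric A /\ forall i, A i i = 0.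

Definition chi {n} (A : Mat n) : Mat n := fun i j => if i == j then 0 else A i j.

Definition qform {n} (A : Mat n) (x : 'I_n -> R) : R :=
  \big[Rplus/0]_(i < n) \big[Rplus/0]_(j < n) (x i * A i j * x j).

Definition psd {n} (A : Mat n) : Prop :=
  symmetric A /\ forall x, 0 <= qform A x.
Definition pd {n} (A : Mat n) : Prop :=
  symmetric A /\ forall x, (exists i, x i <> 0) -> 0 < qform A x.

Definition delta_max {n} (S : Mat n) : R :=
  ln (mdet (mmul (msub (minv S) (chi (minv S))) S)).

Definition Jt {n} (S : Mat n) (delta lam : R) (Gam Th : Mat n) : R :=
  lam * (- ln (mdet (madd (minv S) (mscale (/ lam) (msub (chi Th) Gam))))
         - ln (mdet S) + delta).

Definition C2 {n} (S : Mat n) (lam : R) (Gam Th : Mat n) : Prop :=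
  0 < lam /\ psd (msub (madd mid Gam) Th) /\ psd Gam /\ is_diag Gam /\ is_M Th /\
  pd (madd (minv S) (mscale (/ lam) (msub Th Gam))).

(* A sequence in C_2 is infimizing for Jt on C_2 iff Jt along it converges to
   inf_{C_2} Jt (possibly -infinity).  Since the sequence lies in C_2, its values
   are >= the infimum, so this amounts to: every level r exceeding the infimum
   (i.e. exceeded by some value of Jt on C_2) is eventually an upper bound. *)
Definition infimizing {n} (S : Mat n) (delta : R)
  (lam : nat -> R) (Gam Th : nat -> Mat n) : Prop :=
  forall r : R,
    (exists l G T, C2 S l G T /\ Jt S delta l G T < r) ->
    exists N, forall k, (N <= k)%nat -> Jt S delta (lam k) (Gam k) (Th k) < r.

(* Main.v *)
Require Import Defs.
From Stdlib Require Import Reals Lra Psatz FunctionalExtensionality ClassicalEpsilon Classical.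
From mathcomp Require Import all_boot all_order all_fingroup all_algebra.
From mathcomp Require Import Rstruct.
From mathcomp Require Import ring lra.
Import GRing.Theory Num.Theory Order.TTheory.
Set Implicit Arguments. Unset Strict Implicit.
Local Open Scope ring_scope.
Definition tm {n} (A : Mat n) : 'M[R]_n := \matrix_(i, j) A i j.

Lemma sum_ind n (f : 'I_n -> R) i : \sum_(l < n) f l * (l == i)%:R = f i.
Proof.
rewrite (bigD1 i) //= eqxx mulr1 big1 ?addr0 // => l /negbTE ->; by rewrite mulr0.
Qed.

Lemma sum_ind2 n (g : 'I_n -> R) i j a b :
  \sum_(l < n) g l * (a * (l == i)%:R + b * (l == j)%:R) = a * g i + b * g j.
Proof.
under eq_bigr do rewrite mulrDr mulrCA [g _ * (b * _)]mulrCA.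
by rewrite big_split /= -!mulr_sumr !sum_ind.
Qed.

Lemma qform2 n (A : Mat n) i j a b :
  qform A (fun k => a * (k == i)%:R + b * (k == j)%:R) =
  a * (a * A i i + b * A i j) + b * (a * A j i + b * A j j).
Proof.
rewrite /qform.
transitivity (\sum_(k < n) (a * A k i + b * A k j) * (a * (k == i)%:R + b * (k == j)%:R)).
  apply: eq_bigr => k _.
  rewrite (@sum_ind2 _ (fun l => (a * (k == i)%:R + b * (k == j)%:R) * A k l)) /=. ring.
by rewrite (@sum_ind2 _ (fun k => a * A k i + b * A k j)).
Qed.
Lemma mmulE n (A B : Mat n) i j : mmul A B i j = (tm A *m tm B) i j.
Proof. rewrite !mxE /mmul. apply: eq_bigr => k _. by rewrite !mxE. Qed.
Lemma mdetE n (A : Mat n) : mdet A = \det (tm A).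
Proof. rewrite /mdet /determinant. apply: eq_bigr => s _.
 congr (_ * _). case: (odd_perm s); rewrite /= ?expr1 ?expr0 //. by rewrite Rmult_1_r.
 apply: eq_bigr => i _; by rewrite mxE. Qed.

Lemma midE n (i j : 'I_n) : @mid n i j = (i == j)%:R.
Proof. by rewrite /mid; case: (i == j). Qed.

Lemma tmK n (A : Mat n) i j : tm A i j = A i j.
Proof. by rewrite mxE. Qed.

Lemma tm_mid n : tm (@mid n) = 1%:M.
Proof. apply/matrixP => i j; by rewrite !mxE midE. Qed.

Lemma tm_mmul n (A B : Mat n) : tm (mmul A B) = tm A *m tm B.
Proof. apply/matrixP => i j; by rewrite tmK mmulE. Qed.

Lemma tm_inj n (A B : Mat n) : tm A = tm B -> A = B.
Proof.
move=> H; apply: functional_extensionality => i; apply: functional_extensionality => j.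
by rewrite -(tmK A) -(tmK B) H.
Qed.

Lemma psd_diag n (G : Mat n) i : psd G -> 0 <= G i i.
Proof.
case=> _ H; have := H (fun k => 1 * (k == i)%:R + 0 * (k == i)%:R).
rewrite qform2 => /RleP; by rewrite !mul0r !mul1r !addr0.
Qed.

Lemma pd_diag n (G : Mat n) i : pd G -> 0 < G i i.
Proof.
case=> _ H; have := H (fun k => 1 * (k == i)%:R + 0 * (k == i)%:R).
rewrite qform2 => H1.
have : 0 < 1 * (1 * G i i + 0 * G i i) + 0 * (1 * G i i + 0 * G i i).
  apply/RltP; apply: H1; exists i; rewrite eqxx /=; apply/eqP.
  by rewrite ?mulr1 ?mul0r ?addr0 ?oner_eq0.
by rewrite !mul0r !mul1r !addr0.
Qed.

Lemma pd_entry n (G : Mat n) c : pd G -> (forall i, G i i <= c) ->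
  forall i j, `|G i j| <= c.
Proof.
move=> HG Hc i j.
have [<-|Hij] := eqVneq i j.
  by rewrite ger0_norm ?Hc // ltW // pd_diag.
have Hs : G j i = G i j by case: HG => [Hsym _]; rewrite Hsym.
have key : forall b : R, b ^+ 2 = 1 -> 0 < G i i + G j j + 2 * b * G i j.
  move=> b Hb.
  case: (HG) => _ H; have := H (fun k => 1 * (k == i)%:R + b * (k == j)%:R).
  rewrite qform2 Hs => H1.
  have : 0 < 1 * (1 * G i i + b * G i j) + b * (1 * G i j + b * G j j).
    apply/RltP; apply: H1; exists i; rewrite eqxx (negbTE Hij) /=; apply/eqP.
    by rewrite ?mulr1 ?mulr0 ?addr0 ?oner_eq0.
  have -> : 1 * (1 * G i i + b * G i j) + b * (1 * G i j + b * G j j)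
     = G i i + b ^+ 2 * G j j + 2 * b * G i j by ring.
  by rewrite Hb mul1r.
have h1 := key 1 (expr1n _ _).
have h2 := key (-1) ltac:(by rewrite sqrrN expr1n).
have ci := Hc i; have cj := Hc j.
rewrite ler_norml; apply/andP; split; lra.
Qed.

Lemma det_bound n (A : Mat n) c : (forall i j, `|A i j| <= c) ->
  `|mdet A| <= \sum_(s : 'S_n) c ^+ n.
Proof.
move=> Hc; rewrite mdetE; apply: le_trans (ler_norm_sum _ _ _) _.
apply: ler_sum => s _; rewrite normrM normr_sign mul1r normr_prod.
have -> : c ^+ n = \prod_(i < n) c by rewrite prodr_const card_ord.
apply: ler_prod => i _.
by rewrite normr_ge0 tmK Hc.
Qed.

Lemma qform_vec n (A : Mat n) (v : 'rV[R]_n) :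
  qform A (fun k => v 0 k) = \sum_(l < n) (v *m tm A) 0 l * v 0 l.
Proof.
rewrite /qform exchange_big /=; apply: eq_bigr => l _.
rewrite mxE mulr_suml; apply: eq_bigr => k _; by rewrite tmK.
Qed.

Lemma pd_unit n (S : Mat n) : pd S -> tm S \in unitmx.
Proof.
move=> [Hsym HS]; rewrite unitmxE unitfE; apply/negP => /det0P [v Hv0 Hv].
have Hq : qform S (fun k => v 0 k) = 0.
  rewrite qform_vec Hv; apply: big1 => l _; by rewrite mxE mul0r.
have : Rlt 0 (qform S (fun k => v 0 k)).
  apply: HS; apply: NNPP => Hall; move/eqP: Hv0; apply; apply/matrixP => i j.
  rewrite ord1 mxE; apply: NNPP => Hne; apply: Hall; by exists j.
rewrite Hq; exact: Rlt_irrefl.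
Qed.

Lemma minv_spec n (S : Mat n) : pd S ->
  mmul S (minv S) = mid /\ mmul (minv S) S = mid.
Proof.
move=> HS; rewrite /minv.
apply: (@epsilon_spec _ (inhabits mzero) (fun B : Mat n => mmul S B = mid /\ mmul B S = mid)).
have Hu := pd_unit HS.
exists (fun i j => invmx (tm S) i j).
have E : tm (fun i j => invmx (tm S) i j) = invmx (tm S) by apply/matrixP => i j; rewrite tmK.
split; apply: tm_inj; rewrite tm_mmul E tm_mid ?mulmxV ?mulVmx //.
Qed.

Lemma tm_sym n (A : Mat n) : Defs.symmetric A -> (tm A)^T = tm A.
Proof. move=> H; apply/matrixP => i j; by rewrite !mxE H. Qed.

Lemma minv_sym n (S : Mat n) : pd S -> Defs.symmetric (minv S).
Proof.
move=> HS; have [H1 H2] := minv_spec HS.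
have E1 : tm S *m tm (minv S) = 1%:M by rewrite -tm_mmul H1 tm_mid.
have E2 : tm (minv S) *m tm S = 1%:M by rewrite -tm_mmul H2 tm_mid.
have ES := tm_sym HS.1.
have E3 : (tm (minv S))^T *m tm S = 1%:M by rewrite -ES -trmx_mul E1 trmx1.
have E4 : (tm (minv S))^T = tm (minv S).
  by rewrite -[LHS]mulmx1 -E1 mulmxA E3 mul1mx.
move=> i j; by rewrite -(tmK (minv S) i j) -E4 mxE tmK.
Qed.

Lemma minv_diag n (S : Mat n) i : pd S -> 0 < minv S i i.
Proof.
move=> HS; have [H1 H2] := minv_spec HS.
have E2 : tm (minv S) *m tm S = 1%:M by rewrite -tm_mmul H2 tm_mid.
set v := row i (tm (minv S)).
have Ev : (fun k => minv S i k) = (fun k => v 0 k).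
  by apply: functional_extensionality => k; rewrite !mxE.
have Hq : qform S (fun k => minv S i k) = minv S i i.
  rewrite Ev qform_vec /v -row_mul E2.
  under eq_bigr do rewrite !mxE eq_sym mulrC.
  by rewrite sum_ind.
rewrite -Hq; apply/RltP; apply: HS.2; apply: NNPP => Hall.
have : (tm (minv S) *m tm S) i i = 0.
  rewrite mxE; apply: big1 => k _; rewrite tmK.
  have -> : minv S i k = 0 by apply: NNPP => Hne; apply: Hall; exists k.
  by rewrite mul0r.
rewrite E2 mxE eqxx /=; apply/eqP; exact: oner_neq0.
Qed.

Section LnFacts.
Local Open Scope R_scope.
Lemma ln_nonpos_arg x : ~ 0 < x -> ln x = 0.
Proof. move=> H; rewrite /ln; case: (Rlt_dec 0 x) => //. Qed.
Lemma ln_le_aux x y : 0 < x -> x <= y -> ln x <= ln y.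
Proof.
move=> Hx Hxy; case: (Rle_lt_or_eq_dec _ _ Hxy) => [H|->]; last exact: Rle_refl.
by apply: Rlt_le; apply: ln_increasing.
Qed.
Lemma ln_bound x y : x <= y -> 1 <= y -> ln x <= ln y.
Proof.
move=> Hxy Hy; case: (Rlt_dec 0 x) => Hx; first exact: ln_le_aux.
rewrite ln_nonpos_arg //; rewrite -ln_1; apply: ln_le_aux => //; Lra.lra.
Qed.
Lemma ln_pos_gt1 x : 0 < ln x -> 1 < x.
Proof.
move=> H; case: (Rlt_dec 0 x) => Hx; last by rewrite ln_nonpos_arg in H; Lra.lra.
apply: ln_lt_inv => //; first Lra.lra. by rewrite ln_1.
Qed.
End LnFacts.

Definition Bc n (c : R) : R := \sum_(s : 'S_n) c ^+ n.

Lemma Jt_lower n (S : Mat n) delta l G T c :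
  Rle 0 delta -> C2 S l G T -> (forall i, minv S i i <= c) ->
  Rle (Rmult l (Ropp (Rplus (ln (1 + Bc n c)) (Rabs (ln (mdet S))))))
      (Jt S delta l G T).
Proof.
move=> Hd [Hl [_ [HG [_ [[Tsym Tdiag] Hpd]]]]] Hc.
have chiT : chi T = T.
  apply: functional_extensionality => i; apply: functional_extensionality => j.
  rewrite /chi; case: eqVneq => [->|//]; by rewrite Tdiag.
rewrite /Jt chiT.
set A := madd (minv S) (mscale (/ l) (msub T G)).
have Adiag : forall i, A i i <= c.
  move=> i; rewrite /A /madd /mscale /msub Tdiag ?RplusE ?RmultE ?RminusE ?RinvE ?R0E.
  have h1 := psd_diag i HG; have h2 := Hc i.
  have h3 : 0 <= l^-1 * G i i by rewrite mulr_ge0 // invr_ge0 ltW //; apply/RltP.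
  lra.
have HA := det_bound (pd_entry Hpd Adiag).
rewrite -/A in HA.
have HB : 0 <= Bc n c by apply: le_trans HA; exact: normr_ge0.
have Hln : Rle (ln (mdet A)) (ln (1 + Bc n c)).
  apply: ln_bound; apply/RleP; rewrite RplusE R1E.
    apply: le_trans (real_ler_norm _) _; first exact: num_real.
    apply: le_trans HA _; rewrite /Bc in HB *; lra.
  rewrite /Bc in HB *; lra.
have HlS := Rle_abs (ln (mdet S)).
have Hl' := Hl.
apply: Rmult_le_compat_l; first Lra.lra.
Lra.lra.
Qed.

Ltac rsimp := rewrite ?RplusE ?RmultE ?RminusE ?RoppE ?RinvE ?R0E ?R1E.

Lemma qform_lin n (A B : Mat n) a x :
  qform (fun i j => A i j + a * B i j) x = qform A x + a * qform B x.
Proof.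
rewrite /qform mulr_sumr -big_split; apply: eq_bigr => i _.
rewrite mulr_sumr -big_split; apply: eq_bigr => j _; rsimp.
change (x i * (A i j + a * B i j) * x j = x i * A i j * x j + a * (x i * B i j * x j)).
ring.
Qed.

Lemma qform_mid n x : qform (@mid n) x = \sum_(i < n) x i ^+ 2.
Proof.
rewrite /qform; apply: eq_bigr => i _.
under eq_bigr do rewrite midE.
rewrite (bigD1 i) //= eqxx big1; first by rsimp; rewrite (_ : (true%:R : R) = 1) // mulr1 addr0 expr2.
by move=> j /negbTE Hj; rsimp; rewrite eq_sym Hj mulr0 mul0r.
Qed.

Lemma qform_lb n (B : Mat n) c x : (forall i j, `|B i j| <= c) ->
  - (c * n%:R) * \sum_(i < n) x i ^+ 2 <= qform B x.
Proof.
move=> Hc.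
have H1 : forall i j, - (c / 2) * (x i ^+ 2 + x j ^+ 2) <= x i * B i j * x j.
  move=> i j; have := Hc i j; rewrite ler_norml => /andP [h1 h2].
  have e1 : 0 <= (c + B i j) * (x i + x j) ^+ 2 by rewrite mulr_ge0 ?sqr_ge0 //; lra.
  have e2 : 0 <= (c - B i j) * (x i - x j) ^+ 2 by rewrite mulr_ge0 ?sqr_ge0 //; lra.
  nra.
have H2 : qform B x >= \sum_(i < n) \sum_(j < n) - (c / 2) * (x i ^+ 2 + x j ^+ 2).
  rewrite /qform; apply: ler_sum => i _; apply: ler_sum => j _; exact: H1.
apply: le_trans H2.
rewrite le_eqVlt; apply/orP; left; apply/eqP.
under [RHS]eq_bigr do rewrite -mulr_sumr big_split /= sumr_const card_ord.
rewrite -mulr_sumr big_split /= sumr_const card_ord !sumrMnl.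
set s := \sum_(i < n) x i ^+ 2.
change (- (c * n%:R) * s = - (c / 2) * (s *+ n + s *+ n)).
rewrite -mulr_natr; by field.
Qed.

Lemma entry_le n (A : Mat n) i j :
  `|A i j| <= \sum_(i' < n) \sum_(j' < n) `|A i' j'|.
Proof.
rewrite (bigD1 i) //= (bigD1 j) //=.
have h1 : 0 <= \sum_(j' < n | j' != j) `|A i j'| by apply: sumr_ge0 => k _.
have h2 : 0 <= \sum_(i' < n | i' != i) \sum_(j' < n) `|A i' j'|.
  by apply: sumr_ge0 => k _; apply: sumr_ge0 => k' _.
lra.
Qed.

Lemma pd_diagmat n (d : 'I_n -> R) : (forall i, 0 < d i) ->
  pd (fun i j => if i == j then d i else 0).
Proof.
move=> Hd; split.
  move=> i j; case: eqVneq => [->|h] //.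
move=> x [i0 Hi0].
have E : qform (fun i j => if i == j then d i else 0) x = \sum_(i < n) d i * x i ^+ 2.
  rewrite /qform; apply: eq_bigr => i _.
  rewrite (bigD1 i) //= eqxx big1; first by rsimp; rewrite addr0; ring.
  by move=> j /negbTE Hj; rsimp; rewrite eq_sym Hj mulr0 mul0r.
rewrite E; apply/RltP; rewrite (bigD1 i0) //=.
have h1 : 0 <= \sum_(i < n | i != i0) d i * x i ^+ 2.
  by apply: sumr_ge0 => k _; rewrite mulr_ge0 ?sqr_ge0 // ltW.
have h2 : 0 < d i0 * x i0 ^+ 2.
  rewrite mulr_gt0 // exprn_even_gt0 //; apply/eqP; exact: Hi0.
change (0 < d i0 * x i0 ^+ 2 + \sum_(i < n | i != i0) d i * x i ^+ 2); lra.
Qed.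

Lemma det_diagmat n (d : 'I_n -> R) :
  mdet (fun i j => if i == j then d i else 0) = \prod_(i < n) d i.
Proof.
rewrite mdetE.
have -> : tm (fun i j => if i == j then d i else 0) = diag_mx (\row_i d i).
  apply/matrixP => i j; rewrite !mxE; case: eqVneq => [->|h]; first by rewrite mulr1n.
  by rewrite mulr0n.
rewrite det_diag; apply: eq_bigr => i _; by rewrite mxE.
Qed.

Lemma good_point n (S : Mat n) delta : pd S -> Rlt 0 delta -> Rlt delta (delta_max S) ->
  exists l G T, C2 S l G T /\ Rlt (Jt S delta l G T) 0.
Proof.
move=> HS Hd0 Hd1.
have Msym := minv_sym HS.
have Mpos : forall i, 0 < minv S i i by move=> i; exact: minv_diag.
set M := minv S in Msym Mpos Hd1 *.
set cM := 1 + \sum_(i < n) \sum_(j < n) `|M i j|.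
have HcM0 : 0 <= \sum_(i < n) \sum_(j < n) `|M i j|.
  by apply: sumr_ge0 => i _; apply: sumr_ge0 => j _.
have cM_pos : 0 < cM by rewrite /cM; lra.
have HchiM : forall i j, `|chi M i j| <= cM.
  move=> i j; rewrite /chi; case: (i == j); first by rewrite normr0 ltW.
  have := entry_le M i j; rewrite /cM; lra.
set a := cM * n%:R.
have a_ge0 : 0 <= a by rewrite /a mulr_ge0 // ltW.
set l0 := (a + 1)^-1.
have l0_pos : 0 < l0 by rewrite /l0 invr_gt0; lra.
have l0a : l0 * a <= 1.
  have e : l0 * (a + 1) = 1 by rewrite /l0 mulVf //; apply/eqP => h; lra.
  rewrite mulrDr mulr1 in e; lra.
set Dm := fun i j : 'I_n => if i == j then M i i else 0.
set T0 := mscale (- l0) (chi M).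
have T0diag : forall i, T0 i i = 0 by move=> i; rewrite /T0 /mscale /chi eqxx; rsimp; rewrite mulr0.
have chiT0 : chi T0 = T0.
  apply: functional_extensionality => i; apply: functional_extensionality => j.
  rewrite /chi; case: eqVneq => [->|//]; by rewrite T0diag.
have ED : madd M (mscale (/ l0) (msub T0 mzero)) = Dm.
  apply: functional_extensionality => i; apply: functional_extensionality => j.
  rewrite /madd /mscale /msub /T0 /mscale /chi /Dm /mzero.
  case: eqVneq => [->|_]; rsimp; first by rewrite mulr0 subr0 mulr0 addr0.
  field; apply/eqP => h; lra.
have ED' : msub M (chi M) = Dm.
  apply: functional_extensionality => i; apply: functional_extensionality => j.
  rewrite /msub /chi /Dm; case: eqVneq => [->|_]; rsimp; first by rewrite subr0.
  by rewrite subrr.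
have pdD : pd Dm by apply: pd_diagmat.
have detD : 0 < mdet Dm by rewrite /Dm det_diagmat; apply: prodr_gt0 => i _.
exists l0, mzero, T0; split.
  split; first by apply/RltP.
  split.
    have E : msub (madd mid mzero) T0 = fun i j => mid i j + l0 * chi M i j.
      apply: functional_extensionality => i; apply: functional_extensionality => j.
      rewrite /msub /madd /T0 /mscale /mzero; rsimp; ring.
    rewrite E; split.
      move=> i j; rewrite !midE eq_sym; congr (_ + _ * _).
      by rewrite /chi eq_sym Msym.
    move=> x; apply/RleP; rewrite qform_lin qform_mid.
    have hs : 0 <= \sum_(i < n) x i ^+ 2 by apply: sumr_ge0 => i _; exact: sqr_ge0.
    have hq := qform_lb x HchiM.
    have hq2 : l0 * (- a * \sum_(i < n) x i ^+ 2) <= l0 * qform (chi M) x.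
      by rewrite ler_pM2l.
    have : l0 * (- a * \sum_(i < n) x i ^+ 2) = - (l0 * a) * \sum_(i < n) x i ^+ 2 by ring.
    move=> e; change (0 <= \sum_(i < n) x i ^+ 2 + l0 * qform (chi M) x); nra.
  split.
    split; first by [].
    move=> x; apply/RleP; rewrite /qform; apply: sumr_ge0 => i _; apply: sumr_ge0 => j _.
    by rewrite /mzero; rsimp; rewrite mulr0 mul0r.
  split; first by [].
  split.
    split; last exact: T0diag.
    move=> i j; rewrite /T0 /mscale /chi eq_sym Msym //.
  by rewrite ED.
rewrite /Jt chiT0 ED.
rewrite /delta_max -/M ED' mdetE tm_mmul det_mulmx -!mdetE in Hd1.
have hprod : Rlt 1 (mdet Dm * mdet S).
  apply: ln_pos_gt1; apply: Rlt_trans Hd0 Hd1.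
have detS : 0 < mdet S.
  move/RltP: hprod; rsimp => hprod.
  rewrite -(pmulr_rgt0 _ detD); lra.
rewrite ln_mult in Hd1; try by apply/RltP.
apply/RltP; rsimp; rewrite pmulr_rlt0 //.
move/RltP: Hd1; rsimp => Hd1; lra.
Qed.

Definition csum n (A : Mat n) : R := \sum_(i < n) \sum_(j < n) `|A i j|.
Lemma csum_diag n (A : Mat n) i : A i i <= csum A.
Proof. apply: le_trans (entry_le A i i); exact: real_ler_norm (num_real _). Qed.

Unset Implicit Arguments.
Section Main.
Local Open Scope R_scope.
Theorem lemma1 (n : nat) (S : Mat n) (delta : R)
  (HS : pd S) (Hd0 : 0 < delta) (Hd1 : delta < delta_max S)
  (lam : nat -> R) (Gam Th : nat -> Mat n)
  (HC : forall k, C2 S (lam k) (Gam k) (Th k))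
  (Hlim : Un_cv lam 0) :
  ~ infimizing S delta lam Gam Th.
Proof.
move=> Hinf.
have [l [G [T [HCp HJ]]]] := good_point HS Hd0 Hd1.
set v := Jt S delta l G T in HJ.
set c := csum (minv S).
have Hc : forall i, (minv S i i <= c)%O by move=> i; exact: csum_diag.
set K := ln (1 + Bc n c) + Rabs (ln (mdet S)).
have Hlow : forall k, lam k * - K <= Jt S delta (lam k) (Gam k) (Th k).
  move=> k; apply: Jt_lower; [exact: Rlt_le | exact: HC | exact: Hc].
have [N HN] : exists N, forall k, (N <= k)%nat -> Jt S delta (lam k) (Gam k) (Th k) < v / 2.
  apply: Hinf; exists l, G, T; split => //; change (v < v / 2); Lra.lra.
have HK := Rabs_pos K.
have Heps : 0 < - v / (2 * (Rabs K + 1)).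
  apply: Rdiv_lt_0_compat; Lra.lra.
have [N' HN'] := Hlim _ Heps.
set k := maxn N N'.
have h1 := HN k (leq_maxl _ _).
have h2 := HN' k (ssrnat.leP (leq_maxr _ _)).
have h3 := Hlow k.
have [hl _] := HC k.
rewrite /Rdist Rminus_0_r Rabs_pos_eq in h2; last exact: Rlt_le.
have h4 : lam k * (Rabs K + 1) < - v / 2.
  have -> : - v / 2 = - v / (2 * (Rabs K + 1)) * (Rabs K + 1) 
    by rewrite /Rdiv Rinv_mult Rmult_assoc (Rmult_assoc (/ 2)) Rinv_l ?Rmult_1_r //; Lra.lra.
  apply: Rmult_lt_compat_r => //; Lra.lra.
have h5 : lam k * - (Rabs K + 1) <= lam k * - K.
  have := Rle_abs K => h.
  apply: Rmult_le_compat_l; Lra.lra.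
Lra.lra.
Qed.
End Main.
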